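(* Let $G=(V,E)$ be a $k$-uniform hypergraph with $k\ge 3$. Let $U$ be a supervertex of $G$ with degree $d$ and $|U|\ge 2$. Let $\lambda\neq d$ be a Laplacian H-eigenvalue of $G$ and $\mathbf{x}$ a corresponding Laplacian H-eigenvector. Then for all $i,j\in U$ we have $|x_i|=|x_j|$; if moreover $k$ is odd, then $x_i=x_j$.
   Context: A $k$-uniform hypergraph $G=(V,E)$ has vertex set $V=[n]$ and a set $E$ of $k$-element subsets of $V$. For $i\in V$, $E_i$ is the set of edges containing $i$ and $d_i=|E_i|$ is its degree. For $i\in V$, the set $U=\{j\in V: E_j=E_i\}$ is called a supervertex; all its vertices have the same degree, called the degree of the supervertex. A Laplacian H-eigenvalue of $G$ is a real $\lambda$ for which there exists $\mathbf{x}\in\mathbb{R}^n\setminus\{0\}$ (a Laplacian H-eigenvector) with $\lambda x_i^{k-1}=d_ix_i^{k-1}-\sum_{e\in E_i}\prod_{j\in e\setminus\{i\}}x_j$ for all $i\in[n]$; equivalently, an H-eigenvalue of the Laplacian tensor $\mathcal{L}=\mathcal{D}-\mathcal{A}$, where $\mathcal{A}$ has entries $1/(k-1)!$ at $(i_1,\ldots,i_k)$ with $\{i_1,\ldots,i_k\}\in E$ and $0$ otherwise, and $\mathcal{D}$ is diagonal with entries $d_i$. *)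

(* Defs.v *)
From HB Require Import structures.
From mathcomp Require Import all_boot all_order all_algebra.
Set Implicit Arguments. Unset Strict Implicit. Unset Printing Implicit Defensive.
Import Order.TTheory GRing.Theory Num.Theory.
Local Open Scope ring_scope.

Definition uniform (n k : nat) (E : {set {set 'I_n}}) : Prop :=
  forall e, e \in E -> #|e| = k.

Definition edges_at (n : nat) (E : {set {set 'I_n}}) (i : 'I_n) : {set {set 'I_n}} :=
  [set e in E | i \in e].

Definition deg (n : nat) (E : {set {set 'I_n}}) (i : 'I_n) : nat := #|edges_at E i|.

Definition supervertex (n : nat) (E : {set {set 'I_n}}) (i : 'I_n) : {set 'I_n} :=
  [set j | edges_at E j == edges_at E i].

Definition lap_H_eigenpair (R : realFieldType) (n k : nat) (E : {set {set 'I_n}})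
    (lambda : R) (x : 'I_n -> R) : Prop :=
  (exists i, x i != 0) /\
  forall i : 'I_n,
    lambda * x i ^+ k.-1 =
      (deg E i)%:R * x i ^+ k.-1 - \sum_(e in edges_at E i) \prod_(j in e :\ i) x j.

(* Main.v *)
Require Import Defs.
From HB Require Import structures.
From mathcomp Require Import all_boot all_order all_algebra.
Import Order.TTheory GRing.Theory Num.Theory.
Local Open Scope ring_scope.

Lemma odd_pow_inj (R : realDomainType) (k : nat) (a b : R) :
  odd k -> a ^+ k = b ^+ k -> a = b.
Proof.
move=> ok H.
have k0 : (0 < k)%N by case: k ok {H}.
have : `|a| = `|b|.
  apply/eqP; rewrite -(eqrXn2 k0) ?normr_ge0 // -!normrX H //.
move/eqP; rewrite eqr_norm2 => /orP [/eqP //|/eqP Hab].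
move: H; rewrite Hab exprNn -signr_odd ok expr1 mulN1r => H'.
have : b ^+ k *+ 2 == 0 by rewrite mulr2n -{1}H' addNr.
rewrite mulrn_eq0 /= expf_eq0 => /andP [_ /eqP b0].
by rewrite b0 oppr0.
Qed.

Theorem theorem6p1 (R : realFieldType) (n k : nat) (E : {set {set 'I_n}})
    (i0 : 'I_n) (U : {set 'I_n}) (d : nat) (lambda : R) (x : 'I_n -> R) :
  (3 <= k)%N ->
  uniform k E ->
  U = supervertex E i0 ->
  d = deg E i0 ->
  (2 <= #|U|)%N ->
  lambda != d%:R ->
  lap_H_eigenpair k E lambda x ->
  forall i j, i \in U -> j \in U ->
    `|x i| = `|x j| /\ (odd k -> x i = x j).
Proof.
move=> k3 _ HU Hd _ Hl [_ Heig].
set S := \sum_(e in edges_at E i0) \prod_(l in e) x l.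
have key : forall i, i \in U -> (lambda - d%:R) * x i ^+ k = - S.
  move=> i; rewrite HU inE => /eqP Ei.
  have H := Heig i.
  have Hdi : deg E i = d by rewrite Hd /deg Ei.
  rewrite Hdi Ei in H.
  have -> : x i ^+ k = x i * x i ^+ k.-1 by rewrite -exprS prednK //; exact: leq_trans k3.
  rewrite mulrCA mulrBl H addrAC subrr add0r mulrN mulr_sumr.
  congr (- _); apply: eq_bigr => e.
  move=> He; have : e \in edges_at E i by rewrite Ei.
  rewrite inE => /andP [_ ie].
  rewrite [RHS](bigD1 i) //=. congr (_ * _); apply: eq_bigl => l.
  by rewrite in_setD1 andbC.
move=> i j iU jU.
have Hk : x i ^+ k = x j ^+ k.
  apply: (mulfI (x := lambda - d%:R)); first by rewrite subr_eq0.
  by rewrite !key.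
split; last by move=> ok; exact: odd_pow_inj ok Hk.
apply/eqP; rewrite -(@eqrXn2 _ k) ?normr_ge0 //; last exact: leq_trans k3.
by rewrite -!normrX Hk.
Qed.
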